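(* Let $T$ be an unrooted phylogenetic tree with leaf set $[n]$, $n\ge 2$, and non-negative edge lengths $l(e)$. Define $\varphi_{Pa}(i)=\sum_e \mu(i,e)\,l(e)$, the sum running over all edges of $T$. Then for every leaf $i$, $$\varphi_{Pa}(i)=\frac12\sum_{j\in[n],\,j\ne i}\lambda_{ij}\,d(i,j),$$ where $\lambda_{ij}=\prod_{v\in I(T;i,j)}\frac1{d(v)-1}$ and $d(i,j)$ is the sum of the edge lengths on the path between leaves $i$ and $j$. Moreover, $\sum_{i\in[n]}\varphi_{Pa}(i)=\sum_e l(e)$.
   Context: An unrooted phylogenetic tree on $[n]$ is an unrooted tree with leaf set $[n]$ whose non-leaf vertices are unlabelled and have degree at least 3. $d(v)$ denotes the degree of vertex $v$. For a leaf $i$ and an edge $e$, $I(T;i,e)$ is the set of interior vertices on the path from $i$ to $e$, including the endpoint of $e$ reached first from $i$ (if interior) but not the other endpoint. Then $\mu(i,e)=\frac12\prod_{v\in I(T;i,e)}\frac1{d(v)-1}$, with the empty product equal to 1. For leaves $i\ne j$, $I(T;i,j)$ is the set of interior vertices on the path from $i$ to $j$. *)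

(* Defs.v *)
From HB Require Import structures.
From mathcomp Require Import all_boot all_order all_algebra.
Set Implicit Arguments. Unset Strict Implicit. Unset Printing Implicit Defensive.
Import Order.TTheory GRing.Theory Num.Theory.

Section Phylo.
Variables (V : finType) (adj : rel V).

Definition is_spath (x y : V) (p : seq V) : bool :=
  [&& path adj x p, last x p == y & uniq (x :: p)].

(* v lies on the (simple) path from x to y.  Simple paths have at most
   #|V| vertices, so quantifying over tuples of length < #|V| is exhaustive. *)
Definition on_path (x y v : V) : bool :=
  [exists k : 'I_#|V|, [exists p : k.-tuple V,
     is_spath x y p && (v \in x :: (p : seq V))]].

Definition edge_on_path (x y : V) (e : {set V}) : bool :=
  [exists k : 'I_#|V|, [exists p : k.-tuple V,
     is_spath x y p &&
     (e \in [seq [set u.1; u.2] | u <- zip (x :: (p : seq V)) p])]].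

Definition edges : {set {set V}} :=
  [set e : {set V} | [exists a, [exists b, adj a b && (e == [set a; b])]]].

Definition deg (v : V) : nat := #|[set w | adj v w]|.

Definition is_tree : Prop :=
  [/\ symmetric adj, irreflexive adj,
      (forall x y : V, connect adj x y) &
      (forall (x y : V) (p q : seq V), is_spath x y p -> is_spath x y q -> p = q)].

Variable n : nat.
Variable leaf : 'I_n -> V.

Definition is_phylo_tree : Prop :=
  [/\ is_tree, injective leaf,
      (forall i, deg (leaf i) = 1%N) &
      (forall v, v \notin codom leaf -> (3 <= deg v)%N)].

Definition interior (v : V) : bool := v \notin codom leaf.

Variable R : realFieldType.
Local Open Scope ring_scope.

(* I(T;i,e) : interior vertices on the path from leaf i to the endpoint a of e
   reached first from i (i.e. the other endpoint is not on the path to a) *)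
Definition I_edge (i : 'I_n) (e : {set V}) : {set V} :=
  [set v | interior v &&
     [exists a in e, on_path (leaf i) a v &&
        [forall b in e, on_path (leaf i) a b ==> (b == a)]]].

Definition I_leaves (i j : 'I_n) : {set V} :=
  [set v | interior v && on_path (leaf i) (leaf j) v].

Definition mu (i : 'I_n) (e : {set V}) : R :=
  2^-1 * \prod_(v in I_edge i e) ((deg v).-1)%:R^-1.

Definition lambda (i j : 'I_n) : R :=
  \prod_(v in I_leaves i j) ((deg v).-1)%:R^-1.

Variable l : {set V} -> R.

Definition leaf_dist (i j : 'I_n) : R :=
  \sum_(e in edges | edge_on_path (leaf i) (leaf j) e) l e.

Definition phiPa (i : 'I_n) : R := \sum_(e in edges) mu i e * l e.

End Phylo.

(* Main.v *)
From HB Require Import structures.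
From mathcomp Require Import all_boot all_order all_algebra.
Require Import Defs.
From mathcomp Require Import zify.
Import Order.TTheory GRing.Theory Num.Theory.
Set Implicit Arguments. Unset Strict Implicit. Unset Printing Implicit Defensive.

Section Paths.
Variables (V : finType) (adj : rel V).
Hypothesis sym : symmetric adj.
Hypothesis irr : irreflexive adj.
Hypothesis conn : forall x y, connect adj x y.
Hypothesis uniqp : forall x y p q, is_spath adj x y p -> is_spath adj x y q -> p = q.

Lemma ex_spath x y : exists p, is_spath adj x y p.
Proof.
have /connectP [p pp ->] := conn x y.
case: (shortenP pp) => p' pp' up' _.
by exists p'; rewrite /is_spath pp' eqxx up'.
Qed.

Definition sp x y := xchoose (ex_spath x y).
Lemma spP x y : is_spath adj x y (sp x y).
Proof. exact: xchooseP. Qed.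
Lemma sp_eq x y p : is_spath adj x y p -> p = sp x y.
Proof. by move=> h; apply: uniqp h (spP x y). Qed.
Lemma sp_path x y : path adj x (sp x y).
Proof. by case/and3P: (spP x y). Qed.
Lemma sp_last x y : last x (sp x y) = y.
Proof. by case/and3P: (spP x y) => _ /eqP. Qed.
Lemma sp_uniqs x y : uniq (x :: sp x y).
Proof. by case/and3P: (spP x y). Qed.
Lemma mem_sp_self x y : y \in x :: sp x y.
Proof. by rewrite -{1}(sp_last x y) mem_last. Qed.

Lemma sp_nil x : sp x x = [::].
Proof. by symmetry; apply: sp_eq; rewrite /is_spath /= eqxx. Qed.

Lemma adj_neq a b : adj a b -> a != b.
Proof. by apply: contraTneq => ->; rewrite irr. Qed.

Lemma sp_adj a b : adj a b -> sp a b = [:: b].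
Proof.
move=> h; symmetry; apply: sp_eq.
by rewrite /is_spath /= h eqxx inE (adj_neq h).
Qed.

Lemma sp_cons x w c q : sp x w = c :: q -> adj x c /\ q = sp c w.
Proof.
move=> E; have := spP x w; rewrite E /is_spath /= => /and3P [/andP[h1 h2] h3 /andP[_ h4]].
by split=> //; apply: sp_eq; rewrite /is_spath h2 h3 /= h4.
Qed.

Lemma sp_split x y z : z \in x :: sp x y -> sp x y = sp x z ++ sp z y.
Proof.
move=> hz; have := spP x y; move: hz; move: (sp x y) => s.
case/splitPl=> p1 p2 Hl.
rewrite /is_spath cat_path last_cat -cat_cons cat_uniq => /and3P [/andP[h1 h2] hl /and3P[u1 dis u2]].
have -> : p1 = sp x z by apply: sp_eq; rewrite /is_spath h1 Hl eqxx u1.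
have -> // : p2 = sp z y.
apply: sp_eq; rewrite /is_spath -Hl h2 hl /= u2 andbT.
apply: contra dis => hz; apply/hasP; exists (last x p1) => //; exact: mem_last.
Qed.

Lemma sp_join x z y : uniq (x :: sp x z ++ sp z y) -> sp x y = sp x z ++ sp z y.
Proof.
move=> u; symmetry; apply: sp_eq.
by rewrite /is_spath cat_path sp_path sp_last sp_path last_cat sp_last sp_last eqxx u.
Qed.

Lemma sp_size x y : size (sp x y) < #|V|.
Proof.
by have := max_card (mem (x :: sp x y)); rewrite (card_uniqP (sp_uniqs x y)).
Qed.

Lemma last_rev_belast (x y : V) s : last x s = y -> last y (rev (belast x s)) == x.
Proof. case: s => [|c q] /= E; first by rewrite E. by rewrite rev_cons last_rcons. Qed.

Lemma sp_sym x y : x :: sp x y =i y :: sp y x.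
Proof.
have sl := sp_last x y; move: (sp_path x y) (sp_uniqs x y) sl.
have pe : perm_eq (y :: rev (belast x (sp x y))) (x :: sp x y).
  by rewrite [x :: _]lastI sp_last -rev_rcons perm_rev.
set s := sp x y => ps us sl.
have -> : sp y x = rev (belast x s).
  symmetry; apply: sp_eq; rewrite /is_spath.
  rewrite (perm_uniq pe) sp_uniqs andbT.
  apply/andP; split.
    rewrite -{1}sl rev_path.
    by apply: sub_path ps => a b; rewrite sym.
  by rewrite last_rev_belast.
by move=> z; rewrite (perm_mem pe).
Qed.

Lemma ex_tuple_sp x y (Q : seq V -> bool) :
  [exists k : 'I_#|V|, [exists p : k.-tuple V, is_spath adj x y p && Q p]] = Q (sp x y).
Proof.
apply/idP/idP.
  case/existsP=> k /existsP [p /andP [h q]].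
  by rewrite -(sp_eq h).
move=> q; apply/existsP; exists (Ordinal (sp_size x y)).
apply/existsP; exists (in_tuple (sp x y)); by rewrite /= spP q.
Qed.

Lemma on_pathE x y v : on_path adj x y v = (v \in x :: sp x y).
Proof. exact: (ex_tuple_sp x y (fun p => v \in x :: p)). Qed.

Lemma edge_on_pathE x y e : edge_on_path adj x y e =
  (e \in [seq [set u.1; u.2] | u <- zip (x :: sp x y) (sp x y)]).
Proof. exact: (ex_tuple_sp x y (fun p => e \in [seq [set u.1; u.2] | u <- zip (x :: p) p])). Qed.


Lemma child_sp r a b : adj a b -> a \in r :: sp r b -> sp r b = sp r a ++ [:: b].
Proof. by move=> hab h; rewrite {1}(sp_split h) (sp_adj hab). Qed.

Lemma nonchild_sp r a b : adj a b -> a \notin r :: sp r b -> sp r a = sp r b ++ [:: a].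
Proof.
move=> hab h.
have hba : adj b a by rewrite sym.
rewrite -(sp_adj hba); apply: sp_join; rewrite (sp_adj hba).
by rewrite -cat_cons cat_uniq sp_uniqs /= orbF h.
Qed.

Lemma nonchild_mem r a b : adj a b -> a \notin r :: sp r b -> b \in r :: sp r a.
Proof.
move=> hab h; rewrite (nonchild_sp hab h) -cat_cons mem_cat.
by rewrite mem_sp_self.
Qed.

Lemma not_both r a b : a != b -> a \in r :: sp r b -> b \in r :: sp r a -> False.
Proof.
move=> nab h1 h2.
have e1 := sp_split h1; have e2 := sp_split h2.
have := congr1 size e1; rewrite e2 !size_cat -addnA => /eqP.
rewrite -{1}(addn0 (size (sp r b))) eqn_add2l eq_sym addn_eq0 size_eq0 => /andP [/eqP E _].
by move: (sp_last b a); rewrite E /= => ba; rewrite ba eqxx in nab.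
Qed.

Lemma orient r e : e \in edges adj -> exists a b, [/\ adj a b, a \in r :: sp r b & e = [set a; b]].
Proof.
rewrite inE => /existsP [a /existsP [b /andP [hab /eqP ->]]].
case: (boolP (a \in r :: sp r b)) => h; first by exists a, b.
exists b, a; split; first by rewrite sym.
  exact: nonchild_mem.
by rewrite setUC.
Qed.

Definition D r u := [set w | u \in r :: sp r w].
Definition ch r u := [set c | adj u c && (u \in r :: sp r c)].

Lemma D_self r u : u \in D r u.
Proof. by rewrite inE mem_sp_self. Qed.

Lemma D_dec r u w : w \in D r u -> w != u -> exists2 c, c \in ch r u & w \in D r c.
Proof.
rewrite inE => hw nwu.
have E := sp_split hw.
case E2 : (sp u w) => [|c q].
  by move: (sp_last u w); rewrite E2 /= => wu; rewrite wu eqxx in nwu.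
have [huc _] := sp_cons E2.
exists c; last by rewrite in_set E E2 -cat_cons mem_cat mem_head orbT.
rewrite in_set huc /=.
case: (boolP (u \in r :: sp r c)) => // hn.
have hc := nonchild_mem huc hn.
have := sp_uniqs r w; rewrite E E2 -cat_cons cat_uniq => /and3P [_ /hasPn H _].
by have := H c (mem_head _ _); rewrite /= hc.
Qed.

Lemma D_child r u c w : c \in ch r u -> w \in D r c -> w \in D r u /\ sp u w = c :: sp c w.
Proof.
rewrite !inE => /andP [huc hc] hw.
have E : sp r w = sp r u ++ c :: sp c w by rewrite (sp_split hw) (child_sp huc hc) -catA.
have hu : u \in r :: sp r w by rewrite E -cat_cons mem_cat mem_sp_self.
split => //.
have := E; rewrite (sp_split hu) => E2.
by have := congr1 (drop (size (sp r u))) E2; rewrite !drop_size_cat.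
Qed.

Lemma ch_notD r u c : c \in ch r u -> u \notin D r c.
Proof.
rewrite !inE => /andP [huc hc]; apply/negP => h.
exact: (not_both (adj_neq huc) hc h).
Qed.

Lemma ch_size r u c : c \in ch r u -> size (sp r c) = (size (sp r u)).+1.
Proof.
by rewrite inE => /andP [huc hc]; rewrite (child_sp huc hc) size_cat addn1.
Qed.

Lemma ch_neq r u c : c \in ch r u -> c != r.
Proof.
move=> /ch_size h; apply/eqP => cr; by move: h; rewrite cr sp_nil.
Qed.

Lemma card_ch r u : u != r -> #|ch r u| = (deg adj u).-1.
Proof.
move=> nur.
case E : (sp u r) => [|p q].
  by move: (sp_last u r); rewrite E /= => ur; rewrite ur eqxx in nur.
have [hup Eq] := sp_cons E.
have -> : ch r u = [set w | adj u w] :\ p.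
  apply/setP => c; rewrite !inE.
  case hc : (adj u c); rewrite ?andbF ?andbT //=.
  case: (eqVneq c p) => [->|ncp] /=.
    rewrite -in_cons (sp_sym r p u) -Eq.
    by have := sp_uniqs u r; rewrite E cons_uniq => /andP [/negPf ->].

  case: (boolP (u \in r :: sp r c)) => // hn.
  have h1 := nonchild_mem hc hn.
  rewrite sp_sym in h1.
  have := sp_split h1; rewrite (sp_adj hc) E => -[] cp.
  by rewrite cp eqxx in ncp.
by rewrite /deg (cardsD1 p [set w | adj u w]) inE hup.
Qed.


Variables (n : nat) (leaf : 'I_n -> V).
Hypothesis inj : injective leaf.
Hypothesis deg_leaf : forall i, deg adj (leaf i) = 1%N.
Hypothesis deg_int : forall v, v \notin codom leaf -> (3 <= deg adj v)%N.
Variable R : realFieldType.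
Local Open Scope ring_scope.

Definition f (v : V) : R := if interior leaf v then ((deg adj v).-1)%:R^-1 else 1.
Definition W u w := \prod_(v <- u :: sp u w) f v.

Lemma f_leaf j : f (leaf j) = 1.
Proof. by rewrite /f /interior codom_f. Qed.

Lemma sum_leaf_eq u : \sum_(j < n) ((leaf j == u)%:R : R) = (u \in codom leaf)%:R.
Proof.
case: (boolP (u \in codom leaf)) => [/codomP [j0 ->]|hu].
  rewrite (bigD1 j0) //= eqxx big1 ?addr0 // => j nj.
  by rewrite (inj_eq inj) (negPf nj).
rewrite big1 // => j _; case: eqP => // E.
by rewrite -E codom_f in hu.
Qed.

Lemma Kstep r u : u != r ->
  (forall c, c \in ch r u -> \sum_(j < n | leaf j \in D r c) W c (leaf j) = 1) ->
  \sum_(j < n | leaf j \in D r u) W u (leaf j) = 1.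
Proof.
move=> nur IH.
pose S w := \sum_(c in ch r u | w \in D r c) f u * W c w.
have PW : forall j, (if leaf j \in D r u then W u (leaf j) else 0) =
    (leaf j == u)%:R + S (leaf j).
  move=> j; set w := leaf j.
  case: (eqVneq w u) => [wu|nwu].
    rewrite wu D_self /= /S big1 ?addr0.
      by rewrite /W sp_nil big_cons big_nil mulr1 -wu f_leaf.
    by move=> c /andP [hc hD]; move: (ch_notD hc); rewrite hD.
  rewrite add0r.
  case: ifP => hw.
    have [c0 hc0 hw0] := D_dec hw nwu.
    rewrite /S (big_pred1 c0).
      by rewrite /W (D_child hc0 hw0).2 big_cons.
    move=> c /=; apply/andP/eqP => [[hc hwc]|->]; last by [].
    have E1 := (D_child hc hwc).2; have E2 := (D_child hc0 hw0).2.
    by move: E1; rewrite E2 => -[].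
  rewrite /S big1 // => c /andP [hc hwc].
  by move: (D_child hc hwc).1; rewrite hw.
rewrite big_mkcond /= (eq_bigr _ (fun j _ => PW j)) big_split /= sum_leaf_eq.
rewrite /S (exchange_big_dep (mem (ch r u))) /=; last by move=> j c _ /andP [].
under eq_bigr => c hc.
  rewrite (eq_bigl (fun j => leaf j \in D r c)); last by move=> j; rewrite hc.
  rewrite -big_distrr /= IH // mulr1.
over.
rewrite sumr_const card_ch //.
case: (boolP (u \in codom leaf)) => [/codomP [j0 ->]|hu] /=.
  by rewrite deg_leaf /= mulr0n addr0.
rewrite add0r /f /interior hu -[_ *+ _]mulr_natr mulVf // pnatr_eq0 -lt0n.
by have := deg_int hu; case: (deg adj u) => [|[|[|k]]].
Qed.

Lemma K r u : u != r -> \sum_(j < n | leaf j \in D r u) W u (leaf j) = 1.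
Proof.
suff H : forall k u, u != r -> (#|V| - size (sp r u) <= k)%N ->
    \sum_(j < n | leaf j \in D r u) W u (leaf j) = 1.
  by move=> nur; apply: (H _ u nur (leqnn _)).
elim=> [|k IHk] {}u nur hk.
  by have := sp_size r u; rewrite ltnNge -subn_eq0 -leqn0 hk.
apply: Kstep => // c hc; apply: IHk; first exact: ch_neq hc.
have := sp_size r c; rewrite (ch_size hc) => hs.
by move: hk hs; lia.
Qed.


Lemma prod_conv s : uniq s ->
  \prod_(v in [set v | interior leaf v && (v \in s)]) ((deg adj v).-1)%:R^-1 = \prod_(v <- s) f v :> R.
Proof.
move=> us; rewrite big_uniq // big_mkcond [RHS]big_mkcond; apply: eq_bigr => v _.
by rewrite in_set /f; case: (interior leaf v); case: (v \in s).
Qed.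

Lemma I_edgeE i a b : adj a b -> a \in leaf i :: sp (leaf i) b ->
  I_edge adj leaf i [set a; b] = [set v | interior leaf v && (v \in leaf i :: sp (leaf i) a)].
Proof.
move=> hab ha; apply/setP => v; rewrite !in_set; congr (_ && _).
apply/existsP/idP.
  case=> a0 /andP [ha0 /andP [hv hall]].
  case/set2P: ha0 => E; first by rewrite -E -on_pathE.
  have := forallP hall a; rewrite E set21 /= on_pathE ha /= => /eqP ab.
  by move: (adj_neq hab); rewrite ab eqxx.
move=> hv; exists a; rewrite set21 /= on_pathE hv /=.
apply/forallP => b0; apply/implyP => hb0; apply/implyP; rewrite on_pathE.
case/set2P: hb0 => -> // hb.
by case: (not_both (adj_neq hab) ha hb).
Qed.

Lemma mem_zip1 (s t : seq V) (u : V * V) : u \in zip s t -> (u.1 \in s) && (u.2 \in t).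
Proof.
elim: s t => [|x s IH] [|y t] //=.
rewrite inE => /orP [/eqP -> | /IH /andP [h1 h2]]; first by rewrite !mem_head.
by rewrite !inE h1 h2 !orbT.
Qed.

Lemma zip_last (x : V) s b q : (last x s, b) \in zip (x :: s ++ b :: q) (s ++ b :: q).
Proof.
elim: s x => [|y s IH] x /=; first by rewrite mem_head.
by rewrite inE IH orbT.
Qed.

Lemma edgeE i w a b : adj a b -> a \in leaf i :: sp (leaf i) b ->
  edge_on_path adj (leaf i) w [set a; b] = (b \in leaf i :: sp (leaf i) w).
Proof.
move=> hab ha; rewrite edge_on_pathE; apply/idP/idP.
  case/mapP => u hu E.
  have : b \in [set u.1; u.2] by rewrite -E set22.
  have /andP [h1 h2] := mem_zip1 hu.
  case/set2P => -> //.
  by rewrite inE h2 orbT.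
move=> hb; apply/mapP; exists (a, b) => //.
rewrite (sp_split hb) (child_sp hab ha) -catA /=.
have := zip_last (leaf i) (sp (leaf i) a) b (sp b w).
by rewrite sp_last.
Qed.

Lemma lambdaE i j a b : adj a b -> a \in leaf i :: sp (leaf i) b ->
  b \in leaf i :: sp (leaf i) (leaf j) ->
  lambda adj leaf R i j = (\prod_(v <- leaf i :: sp (leaf i) a) f v) * W b (leaf j).
Proof.
move=> hab ha hb; rewrite /lambda.
have -> : I_leaves adj leaf i j =
    [set v | interior leaf v && (v \in leaf i :: sp (leaf i) (leaf j))].
  by apply/setP => v; rewrite !in_set on_pathE.
rewrite prod_conv ?sp_uniqs // (sp_split hb) (child_sp hab ha) -catA /=.
by rewrite -cat_cons big_cat.
Qed.

Lemma part1 i e (l : {set V} -> R) : e \in edges adj ->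
  mu adj leaf R i e * l e = 2^-1 * \sum_(j < n | j != i)
    (if edge_on_path adj (leaf i) (leaf j) e then lambda adj leaf R i j * l e else 0).
Proof.
move=> he; have [a [b [hab ha ->]]] := orient (leaf i) he.
have nbr : b != leaf i by apply: (@ch_neq (leaf i) a); rewrite in_set hab ha.
rewrite /mu (I_edgeE hab ha) prod_conv ?sp_uniqs // -mulrA; congr (_ * _).
transitivity (\sum_(j < n) (if edge_on_path adj (leaf i) (leaf j) [set a; b]
    then lambda adj leaf R i j * l [set a; b] else 0)); last first.
  rewrite (bigD1 i) //= (edgeE _ hab ha) sp_nil inE (negPf nbr) /= add0r.
  by [].
rewrite (eq_bigr (fun j => if leaf j \in D (leaf i) b then
   ((\prod_(v <- leaf i :: sp (leaf i) a) f v) * W b (leaf j)) * l [set a; b] else 0)); last first.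
  by move=> j _; rewrite (edgeE _ hab ha) in_set; case: ifP => // hb; rewrite (lambdaE hab ha hb).
set P := \prod_(v <- leaf i :: sp (leaf i) a) f v.
by rewrite -big_mkcond /= -big_distrl -big_distrr /= K ?mulr1.
Qed.

Lemma part2_half a b : adj a b ->
  \sum_(i < n) (if a \in leaf i :: sp (leaf i) b then
     \prod_(v in I_edge adj leaf i [set a; b]) ((deg adj v).-1)%:R^-1 else 0) = 1 :> R.
Proof.
move=> hab; rewrite -[RHS](@K b a) ?adj_neq // [RHS]big_mkcond; apply: eq_bigr => i _.
rewrite in_set -(sp_sym (leaf i) b a); case: ifP => // h.
rewrite (I_edgeE hab h) prod_conv ?sp_uniqs // /W; apply: perm_big.
by apply: uniq_perm; [exact: sp_uniqs | exact: sp_uniqs | exact: sp_sym].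
Qed.

Lemma part2 e : e \in edges adj -> \sum_(i < n) mu adj leaf R i e = 1.
Proof.
rewrite inE => /existsP [a /existsP [b /andP [hab /eqP ->]]].
have hba : adj b a by rewrite sym.
rewrite /mu -big_distrr /=.
rewrite (eq_bigr (fun i => (if a \in leaf i :: sp (leaf i) b then
     \prod_(v in I_edge adj leaf i [set a; b]) ((deg adj v).-1)%:R^-1 else 0) +
     (if b \in leaf i :: sp (leaf i) a then
     \prod_(v in I_edge adj leaf i [set b; a]) ((deg adj v).-1)%:R^-1 else 0))).
  by rewrite big_split /= part2_half // part2_half // mulVf // pnatr_eq0.
move=> i _; rewrite [[set b; a]]setUC.
case: (boolP (a \in leaf i :: sp (leaf i) b)) => h1.
  case: ifP => h2; last by rewrite addr0.
  by case: (not_both (adj_neq hab) h1 h2).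
by rewrite (nonchild_mem hab h1) add0r.
Qed.

End Paths.

Unset Implicit Arguments.
Local Open Scope ring_scope.

Theorem theorem9 (R : realFieldType) (n : nat) (V : finType) (adj : rel V)
    (leaf : 'I_n -> V) (l : {set V} -> R) :
  (2 <= n)%N ->
  is_phylo_tree adj leaf ->
  (forall e, e \in edges adj -> 0 <= l e) ->
  (forall i : 'I_n,
     phiPa adj leaf l i =
     2^-1 * \sum_(j < n | j != i) lambda adj leaf R i j * leaf_dist adj leaf l i j)
  /\ \sum_(i < n) phiPa adj leaf l i = \sum_(e in edges adj) l e.
Proof.
move=> _ [[sym irr conn uq] inj dl di] _.
split.
  move=> i; rewrite /phiPa.
  transitivity (\sum_(e in edges adj) 2^-1 * \sum_(j < n | j != i)
     (if edge_on_path adj (leaf i) (leaf j) e then lambda adj leaf R i j * l e else 0)).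
    by apply: eq_bigr => e he; rewrite (part1 sym irr conn uq inj dl di).
  rewrite -big_distrr /=; congr (_ * _).
  rewrite exchange_big /=; apply: eq_bigr => j _.
  by rewrite /leaf_dist big_distrr /= big_mkcondr.
rewrite /phiPa exchange_big /=; apply: eq_bigr => e he.
by rewrite -big_distrl /= (part2 sym irr conn uq inj dl di) ?mul1r.
Qed.
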